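(* Let $r\ge2$ be an integer and $n\in\mathbb N$. There is a constant $c_1>0$ depending only on $r$ such that the following holds. Let $g\in\mathbb W^{r-1}$ and suppose that for some fixed $j\in\mathbb Z$, for each $\nu=j,j+1,\dots,j+2(r-2)$ there is a point $t_\nu\in I_\nu$ with $|g(t_\nu)|\le h^{r-1}$. Then $|g(x)|\le c_1h^{r-1}$ for every $x\in\bigcup_{\nu=j}^{j+2(r-2)}I_\nu$.
   Context: $\mathbb W^{m}$ ($m\in\mathbb N$) is the class of $2\pi$-periodic functions whose derivative of order $m-1$ exists and is absolutely continuous and whose $m$-th derivative satisfies $|g^{(m)}|\le1$ a.e. on $\mathbb R$. For fixed $n$: $x_j:=-j\pi/n$ ($j\in\mathbb Z$), $I_j:=[x_j,x_{j-1}]$, $h:=\pi/n$. *)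

(* Defs.v *)
From HB Require Import structures.
From mathcomp Require Import all_boot all_order all_algebra.
From mathcomp Require Import all_classical all_reals all_analysis.
Set Implicit Arguments. Unset Strict Implicit. Unset Printing Implicit Defensive.
Import Order.TTheory GRing.Theory Num.Theory.
Local Open Scope classical_set_scope.
Local Open Scope ring_scope.

Definition abs_cont_on (R : realType) (a b : R) (f : R -> R) : Prop :=
  forall e : R, 0 < e -> exists2 d : R, 0 < d &
    forall (N : nat) (u v : nat -> R),
      (forall k, (k < N)%N -> a <= u k /\ u k <= v k /\ v k <= b) ->
      (forall k, (k.+1 < N)%N -> v k <= u k.+1) ->
      \sum_(k < N) (v k - u k) < d ->
      \sum_(k < N) `|f (v k) - f (u k)| < e.

(* The class W^m (m >= 1): 2pi-periodic functions whose (m-1)-th derivative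
   exists (everywhere) and is absolutely continuous (on every compact
   interval), and whose m-th derivative satisfies |g^(m)| <= 1 a.e. *)
Definition Wclass (R : realType) (m : nat) (g : R -> R) : Prop :=
  [/\ (forall x : R, g (x + 2 * pi) = g x),
      (forall k : nat, (k < m.-1)%N -> forall x : R, derivable (derive1n k g) x 1),
      (forall a b : R, a <= b -> abs_cont_on a b (derive1n m.-1 g)) &
      {ae (@lebesgue_measure R), forall x : R,
          derivable (derive1n m.-1 g) x 1 /\ `|derive1n m g x| <= 1}].

Definition hstep (R : realType) (n : nat) : R := pi / n%:R.
Definition xpt (R : realType) (n : nat) (j : int) : R := - (j%:~R * pi) / n%:R.
Definition Ival (R : realType) (n : nat) (j : int) : set R :=
  [set t | xpt R n j <= t <= xpt R n (j - 1)].

(* Main.v *)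
Require Import Defs.
From HB Require Import structures.
From mathcomp Require Import all_boot all_order all_algebra.
From mathcomp Require Import all_classical all_reals all_analysis.
From mathcomp Require Import measurable_realfun.
From mathcomp Require Import lra ring zify.
Import Order.TTheory GRing.Theory Num.Theory.
Local Open Scope classical_set_scope.
Local Open Scope ring_scope.
Import numFieldNormedType.Exports.

Lemma deriv_loc (R : realType) (f : R -> R) c e : derivable f c 1 -> 0 < e ->
  exists2 eta : R, 0 < eta & forall y, `|y - c| < eta ->
    `|f y - f c| <= (`|derive1 f c| + e) * `|y - c|.
Proof.
move=> df e0.
have cv := df. rewrite /derivable in cv. move/cvgr_dist_lt: cv => /(_ e e0).
rewrite derive1E.
rewrite near_withinE => /nbhs_ballP[eta eta0 H].
exists eta => // y yc.
have [->|ync] := eqVneq y c; first by rewrite !subrr normr0 mulr0.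
have := H (y - c).
rewrite /ball /= sub0r normrN => /(_ yc).
rewrite subr_eq0 => /(_ ync).
rewrite /GRing.scale /= mulr1 subrK -/(derive f c 1) => Hq.
have yc0 : y - c != 0 by rewrite subr_eq0.
have -> : f y - f c = ((y - c)^-1 * (f y - f c)) * (y - c) by rewrite mulrC mulrA mulfV // mul1r.
rewrite normrM ler_wpM2r //.
set q := _ * (f y - f c) in Hq *.
rewrite -[q](subKr ('D_1 f c)).
apply: (le_trans (ler_normB _ _)).
by rewrite lerD2l ltW.
Qed.
Lemma chain_le (R : realType) (N : nat) (u v : nat -> R) :
  (forall k, (k < N)%N -> u k <= v k) ->
  (forall k, (k.+1 < N)%N -> v k <= u k.+1) ->
  forall i j, (i < j)%N -> (j < N)%N -> v i <= u j.
Proof.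
move=> huv hvu i j; elim: j => // j IH.
rewrite ltnS leq_eqVlt => /orP[/eqP <-|ij] jN; first exact: hvu.
apply: (le_trans (IH ij (ltnW jN))).
apply: (le_trans (huv j (ltnW jN))); exact: hvu.
Qed.

Lemma fam_len (R : realType) (U : set R) (N : nat) (u v : nat -> R) :
  measurable U ->
  (forall k, (k < N)%N -> u k <= v k) ->
  (forall k, (k.+1 < N)%N -> v k <= u k.+1) ->
  (forall k, (k < N)%N -> `[u k, v k[%classic `<=` U) ->
  ((\sum_(k < N) (v k - u k))%:E <= (@lebesgue_measure R) U)%E.
Proof.
move=> mU huv hvu hU.
pose F (k : 'I_N) : set R := `[u k, v k[%classic.
have tF : trivIset setT F.
  move=> i j _ _ [x [/= xi xj]].
  apply/val_inj/eqP; apply: contraT => ij.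
  move: xi xj; rewrite /F /= !in_itv /=.
  move=> /andP[ui xvi] /andP[uj xvj].
  have [lij|lji|eij] := ltngtP i j.
  - have := @chain_le _ N u v huv hvu _ _ lij (ltn_ord j).
    by move=> /(lt_le_trans xvi) /(le_lt_trans uj); rewrite ltxx.
  - have := @chain_le _ N u v huv hvu _ _ lji (ltn_ord i).
    by move=> /(lt_le_trans xvj) /(le_lt_trans ui); rewrite ltxx.
  - by move: ij; rewrite (val_inj eij) eqxx.
have mF : forall k, measurable (F k) by move=> k; exact: measurable_itv.
have := measure_bigsetU_ord (@lebesgue_measure R) xpredT mF tF.
have Hs : (\sum_(i < N) (@lebesgue_measure R) (F i) = (\sum_(k < N) (v k - u k))%:E)%E.
  rewrite -sumEFin; apply: eq_bigr => k _.
  rewrite /F lebesgue_measure_itv /=.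
  rewrite lte_fin; case: ltP => // h.
  have /eqP -> : u k == v k by rewrite eq_le h huv.
  by rewrite subrr.
rewrite Hs => <-.
apply: le_measure; rewrite ?inE //.
- by apply: bigsetU_measurable => k _; exact: mF.
- apply: (@big_ind _ (fun S : set R => S `<=` U)) => //.
  + by move=> A B AU BU x [/AU|/BU].
  + by move=> k _; exact: hU.
Qed.
Definition Pfam (R : realType) (f : R -> R) (U : set R) (a e s : R) : Prop :=
  exists N (u v : nat -> R),
   [/\ forall k, (k < N)%N -> a <= u k /\ u k <= v k /\ v k <= s,
       forall k, (k.+1 < N)%N -> v k <= u k.+1,
       forall k, (k < N)%N -> `[u k, v k[%classic `<=` U &
       `|f s - f a| <= (1 + e) * (s - a) + \sum_(k < N) `|f (v k) - f (u k)|].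

Arguments Pfam {R}.

Lemma Pfam_a (R : realType) (f : R -> R) U a e : Pfam f U a e a.
Proof.
exists 0%N, (fun _ => a), (fun _ => a); split => //.
by rewrite !subrr normr0 mulr0 big_ord0 addr0.
Qed.

Lemma Pfam_ext2 (R : realType) (f : R -> R) U a e t y : 0 <= e ->
  Pfam f U a e t -> t <= y -> `|f y - f t| <= (1 + e) * (y - t) ->
  Pfam f U a e y.
Proof.
move=> e0 [N [u [v [H1 H2 H3 H4]]]] ty Hy.
exists N, u, v; split => //.
  move=> k kN; have [? [? ?]] := H1 k kN; do 2?split => //; exact: le_trans ty.
have -> : f y - f a = (f y - f t) + (f t - f a) by rewrite addrA subrK.
apply: (le_trans (ler_normD _ _)).
have -> : (1 + e) * (y - a) = (1 + e) * (y - t) + (1 + e) * (t - a).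
  by rewrite -mulrDr addrA subrK.
by rewrite -addrA lerD.
Qed.

Lemma Pfam_ext1 (R : realType) (f : R -> R) U a e t y : 0 <= e -> a <= t ->
  Pfam f U a e t -> t <= y -> `[t, y[%classic `<=` U ->
  Pfam f U a e y.
Proof.
move=> e0 at_ [N [u [v [H1 H2 H3 H4]]]] ty Hy.
pose u' k := if k == N then t else u k.
pose v' k := if k == N then y else v k.
exists N.+1, u', v'; split.
- move=> k; rewrite ltnS leq_eqVlt => /orP[/eqP ->|kN].
    by rewrite /u' /v' eqxx.
  rewrite /u' /v' (ltn_eqF kN).
  have [? [? ?]] := H1 k kN; do 2?split => //; exact: le_trans ty.
- move=> k; rewrite ltnS leq_eqVlt => /orP[/eqP kN|kN].
    rewrite /u' /v' kN eqxx.
    have -> : (k == N) = false by rewrite -kN; apply/negbTE; rewrite neq_ltn ltnSn.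
    have kN' : (k < N)%N by rewrite -kN.
    by have [_ [_ ?]] := H1 k kN'.
  rewrite /u' /v' (ltn_eqF kN) (ltn_eqF (ltnW kN)); exact: H2.
- move=> k; rewrite ltnS leq_eqVlt => /orP[/eqP ->|kN].
    by rewrite /u' /v' eqxx.
  rewrite /u' /v' (ltn_eqF kN); exact: H3.
- rewrite big_ord_recr /= /u' /v' eqxx.
  under eq_bigr => k _ do rewrite (ltn_eqF (ltn_ord k)).
  have -> : f y - f a = (f y - f t) + (f t - f a) by rewrite addrA subrK.
  apply: (le_trans (ler_normD _ _)).
  rewrite [X in _ <= X]addrA [X in _ <= X]addrC lerD2l.
  apply: (le_trans H4); rewrite lerD2r ler_wpM2l //.
    by rewrite addr_ge0.
  by rewrite lerD2r.
Qed.

Arguments Pfam_ext1 {R f U a e t y}.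
Arguments Pfam_ext2 {R f U a e t y}.
Arguments deriv_loc {R f c e}.
Arguments fam_len {R U N u v}.

Lemma lip_eps (R : realType) (f : R -> R) (a b e : R) : 0 < e -> a <= b ->
  abs_cont_on a b f ->
  {ae (@lebesgue_measure R), forall x, derivable f x 1 /\ `|derive1 f x| <= 1} ->
  `|f b - f a| <= (1 + e) * (b - a) + e.
Proof.
move=> e0 ab /(_ e e0) [d d0 AC] Hae.
case: Hae => A [mA A0 hA].
have Aoo : (lebesgue_measure A < +oo)%E by rewrite A0 ltry.
have [U [oU AU UA]] := lebesgue_regularity_outer mA Aoo d0.
have mU : measurable U := open_measurable oU.
have muU : (lebesgue_measure U < d%:E)%E.
  have sU : U `<=` A `|` (U `\` A).
    by move=> x Ux; case: (pselect (A x)) => Ax; [left|right].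
  have mAU : measurable (A `|` (U `\` A)).
    by apply: measurableU => //; exact: measurableD.
  apply: (le_lt_trans (le_measure (@lebesgue_measure R) _ _ sU)); rewrite ?inE //.
  apply: (le_lt_trans (measureU2 _ mA (measurableD mU mA))).
  have A0' : (@lebesgue_measure R A = 0)%E := A0.
  rewrite [X in (X + _)%E](_ : _ = 0%E) ?add0e //.
have Hsum : forall s, s <= b -> Pfam f U a e s ->
    `|f s - f a| <= (1 + e) * (s - a) + e.
  move=> s sb [N [u [v [H1 H2 H3 H4]]]]; apply: (le_trans H4).
  rewrite lerD2l ltW //; apply: AC.
  - move=> k kN; have [? [? ?]] := H1 k kN; do 2?split => //; exact: le_trans sb.
  - exact: H2.
  - rewrite -lte_fin; apply: le_lt_trans muU; apply: fam_len => //.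
    by move=> k kN; have [_ [? _]] := H1 k kN.
suff : Pfam f U a e b by exact: Hsum.
pose G := [set s | a <= s <= b /\ forall y, a <= y <= s -> Pfam f U a e y].
have Ga : G a.
  split; first by rewrite lexx ab.
  move=> y /andP[ay ya]; have -> : y = a by apply/eqP; rewrite eq_le ay ya.
  exact: Pfam_a.
have G0 : G !=set0 by exists a.
have supG : has_sup G by split => //; exists b => s [/andP[_ ?] _].
set c := sup G.
have ac : a <= c := sup_upper_bound supG Ga.
have cb : c <= b by apply: ge_sup => // s [/andP[_ ?] _].
have key : forall y, a <= y -> y < c -> Pfam f U a e y.
  move=> y ay yc; have [s [_ Hs] ys] := sup_gt G0 yc; apply: Hs.
  by rewrite ay ltW.
have keyt : forall eta, 0 < eta -> Pfam f U a e (Num.max a (c - eta / 2)).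
  move=> eta eta0; case: (leP (c - eta / 2) a) => h.
    exact: Pfam_a.
  apply: key; first exact: ltW.
  by rewrite ltrBlDr ltrDl divr_gt0.
have tc : forall eta, 0 < eta -> Num.max a (c - eta / 2) <= c.
  move=> eta eta0; rewrite ge_max ac /= lerBlDr lerDl divr_ge0 // ltW //.
have ct : forall eta, 0 < eta -> c - eta < Num.max a (c - eta / 2).
  move=> eta eta0; rewrite lt_max; apply/orP; right.
  by rewrite ltrD2l ltrN2 ltr_pdivrMr // ltr_pMr // ltr1n.
suff [eta eta0 Heta] : exists2 eta : R, 0 < eta &
    forall y, a <= y <= b -> y < c + eta -> Pfam f U a e y.
  have cbeq : c = b.
    apply/eqP; rewrite eq_le cb /= leNgt; apply/negP => cltb.
    pose y0 := Num.min b (c + eta / 2).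
    have cy0 : c < y0 by rewrite lt_min cltb ltrDl divr_gt0.
    have Gy0 : G y0.
      split; first by rewrite (le_trans ac (ltW cy0)) /= ge_min lexx.
      move=> y /andP[ay yy0]; apply: Heta.
        by rewrite ay /= (le_trans yy0) // ge_min lexx.
      apply: (le_lt_trans yy0); rewrite gt_min; apply/orP; right.
      by rewrite ltrD2l ltr_pdivrMr // ltr_pMr // ltr1n.
    by have := sup_upper_bound supG Gy0; rewrite leNgt cy0.
  apply: Heta; first by rewrite ab lexx.
  by rewrite -cbeq ltrDl.
case: (pselect (U c)) => [Uc|nUc].
  have : nbhs c U by apply: open_nbhs_nbhs; split.
  move=> /nbhs_ballP[eta eta0 Hb]; exists eta => // y /andP[ay yb] yceta.
  case: (ltP y c) => [yc|cy]; first exact: key.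
  apply: (Pfam_ext1 (ltW e0) _ (keyt _ eta0)); first by rewrite le_max lexx.
    exact: le_trans (tc _ eta0) cy.
  move=> z; rewrite /= in_itv /= => /andP[tz zy]; apply: Hb.
  rewrite /ball /= ltr_norml; apply/andP; split.
    lra.
  have := ct _ eta0; move: tz; set t := Num.max _ _ => tz ctz; lra.
have [dc fc1] : derivable f c 1 /\ `|derive1 f c| <= 1.
  case: (pselect (derivable f c 1 /\ `|derive1 f c| <= 1)) => // nP.
  by exfalso; apply: nUc; apply: AU; apply: hA.
have [eta eta0 Hd] := deriv_loc dc e0.
exists eta => // y /andP[ay yb] yceta.
case: (ltP y c) => [yc|cy]; first exact: key.
have tc' := tc _ eta0; have ct' := ct _ eta0.
set t := Num.max a (c - eta / 2) in tc' ct' *.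
apply: (Pfam_ext2 (ltW e0) (keyt _ eta0)); first exact: le_trans cy.
have B1 : `|f y - f c| <= (1 + e) * (y - c).
  have n1 : `|y - c| = y - c by rewrite ger0_norm // subr_ge0.
  have : `|y - c| < eta by rewrite n1; lra.
  move=> /Hd; rewrite n1 => H.
  by apply: (le_trans H); rewrite ler_wpM2r ?subr_ge0 // lerD2r.
have B2 : `|f t - f c| <= (1 + e) * (c - t).
  have n1 : `|t - c| = c - t by rewrite ler0_norm ?opprB // subr_le0.
  have : `|t - c| < eta by rewrite n1; lra.
  move=> /Hd; rewrite n1 => H.
  by apply: (le_trans H); rewrite ler_wpM2r ?subr_ge0 // lerD2r.
have -> : f y - f t = (f y - f c) + - (f t - f c) by rewrite opprB addrA subrK.
apply: (le_trans (ler_normD _ _)); rewrite normrN.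
have -> : y - t = (y - c) + (c - t) by rewrite addrA subrK.
by rewrite mulrDr lerD.
Qed.

Arguments lip_eps {R f a b e}.

Lemma lip_le (R : realType) (f : R -> R) :
  (forall a b : R, a <= b -> abs_cont_on a b f) ->
  {ae (@lebesgue_measure R), forall x, derivable f x 1 /\ `|derive1 f x| <= 1} ->
  forall x y : R, `|f y - f x| <= `|y - x|.
Proof.
move=> hac hae.
suff H : forall x y, x <= y -> `|f y - f x| <= y - x.
  move=> x y; case: (leP x y) => xy.
    by rewrite (ger0_norm (x := y - x)) ?subr_ge0 //; exact: H.
  rewrite (distrC (f y)) (distrC y) (ger0_norm (x := x - y)); last first.
    by rewrite subr_ge0 ltW.
  exact/H/ltW.
move=> x y xy; apply/ler_addgt0Pr => e' e'0.
have d0 : 0 < y - x + 1 by rewrite ltr_wpDl // subr_ge0.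
have ee : 0 < e' / (y - x + 1) by rewrite divr_gt0.
apply: (le_trans (lip_eps ee xy (hac _ _ xy) hae)).
have -> : (1 + e' / (y - x + 1)) * (y - x) + e' / (y - x + 1)
   = (y - x) + e' / (y - x + 1) * (y - x + 1) by ring.
by rewrite divfK // gt_eqF.
Qed.
Lemma derive1n_horner (R : realType) (q : {poly R}) k :
  derive1n k (horner q) = horner (q^`(k)).
Proof.
elim: k => [|k IH]; first by rewrite derive1n0 derivn0.
by rewrite derive1nS IH -derivE derivnS.
Qed.

Lemma derive1n_subP (R : realType) (g : R -> R) (q : {poly R}) k :
  (forall j, (j < k)%N -> forall x, derivable (derive1n j g) x 1) ->
  derive1n k (g - horner q) = derive1n k g - horner (q^`(k)).
Proof.
elim: k => [|k IH] H; first by rewrite !derive1n0 derivn0.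
rewrite derive1nS IH; last by move=> j jk; apply: H; exact: ltnW.
apply/funext => x.
rewrite derive1nS derivnS derivE derive1E deriveB.
- by rewrite -!derive1E.
- exact: H.
- exact: derivable_horner.
Qed.

Lemma derivable_subP (R : realType) (g : R -> R) (q : {poly R}) k x :
  (forall j, (j <= k)%N -> forall x, derivable (derive1n j g) x 1) ->
  derivable (derive1n k (g - horner q)) x 1.
Proof.
move=> H; rewrite derive1n_subP; last by move=> j jk; apply: H; exact: ltnW.
apply: derivableB; first exact: H.
exact: derivable_horner.
Qed.

Lemma der_cont (R : realType) (f : R -> R) a b :
  (forall x, derivable f x 1) -> {within `[a, b], continuous f}.
Proof.
move=> H; apply: continuous_subspaceT => x.
exact/differentiable_continuous/derivable1_diffP/H.
Qed.

Lemma mvt_bound (R : realType) (f : R -> R) (lo hi B : R) :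
  (forall x, derivable f x 1) ->
  (forall c, lo <= c <= hi -> `|derive1 f c| <= B) ->
  forall x z, lo <= x <= hi -> lo <= z <= hi -> `|f x - f z| <= B * `|x - z|.
Proof.
move=> D HB.
suff W : forall x z, lo <= x <= hi -> lo <= z <= hi -> z <= x ->
    `|f x - f z| <= B * `|x - z|.
  move=> x z hx hz; case: (leP z x) => zx; first exact: W.
  by rewrite distrC (distrC x); apply: W => //; exact: ltW.
move=> x z /andP[lx xh] /andP[lz zh] zx.
have Hd : forall y, y \in `]z, x[ -> is_derive y 1 f (derive1 f y).
  by move=> y _; rewrite derive1E; exact: derivableP.
have [c cI ->] := @MVT_segment R f (derive1 f) z x zx Hd (@der_cont R f z x D).
rewrite normrM ler_wpM2r //; apply: HB.
by move: cI; rewrite in_itv /= => /andP[zc cx]; rewrite (le_trans lz zc) (le_trans cx xh).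
Qed.

Lemma rolle_gen (R : realType) (psi : R -> R) (M m : nat) (p : nat -> R) (lo hi : R) :
  (forall k, (k < M)%N -> forall x, derivable (derive1n k psi) x 1) ->
  (forall i, (i.+1 < m)%N -> p i < p i.+1) ->
  (forall i, (i < m)%N -> lo <= p i <= hi /\ psi (p i) = 0) ->
  forall k, (k <= M)%N -> exists q : nat -> R,
    (forall i, (i.+1 < m - k)%N -> q i < q i.+1) /\
    (forall i, (i < m - k)%N -> lo <= q i <= hi /\ derive1n k psi (q i) = 0).
Proof.
move=> D pinc pz; elim => [|k IH] kM.
  by exists p; split => [i|i]; rewrite subn0 ?derive1n0; [exact: pinc|exact: pz].
have [q [qinc qz]] := IH (ltnW kM).
have : forall i, exists c : R, (i.+1 < m - k)%N ->
    q i < c < q i.+1 /\ derive1n k.+1 psi c = 0.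
  move=> i; case: (boolP (i.+1 < m - k)%N) => hi'; last by exists 0.
  have [_ z0] := qz i (ltnW hi'); have [_ z1] := qz i.+1 hi'.
  have Dk : forall x, derivable (derive1n k psi) x 1 by apply: D.
  have [c cI cd] := @Rolle R (derive1n k psi) (q i) (q i.+1) (qinc i hi')
    (fun x _ => Dk x) (@der_cont R _ _ _ Dk) (etrans z0 (esym z1)).
  exists c => _; split; first by move: cI; rewrite in_itv.
  by rewrite derive1nS derive1E; exact: (@derive_val _ _ _ _ _ _ _ cd).
case/choice => q' Hq'.
exists q'; split.
  move=> i hi'.
  have h1 : (i.+1 < m - k)%N by move: hi'; rewrite subnS; case: (m - k)%N => //= n; rewrite ltnS => /ltnW.
  have h2 : (i.+2 < m - k)%N by move: hi'; rewrite subnS; case: (m - k)%N => //= n.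
  have [/andP[_ a1] _] := Hq' i h1; have [/andP[a2 _] _] := Hq' i.+1 h2.
  exact: lt_trans a1 a2.
move=> i hi'.
have h1 : (i.+1 < m - k)%N by move: hi'; rewrite subnS; case: (m - k)%N.
have [/andP[a1 a2] ->] := Hq' i h1; split => //.
have [/andP[l1 _] _] := qz i (ltnW h1); have [/andP[_ u1] _] := qz i.+1 h1.
by rewrite (le_trans l1 (ltW a1)) (le_trans (ltW a2) u1).
Qed.

Lemma down_bound (R : realType) (psi : R -> R) (M : nat) (p : nat -> R) (lo hi : R) :
  (forall k, (k < M)%N -> forall x, derivable (derive1n k psi) x 1) ->
  (forall x y, `|derive1n M psi y - derive1n M psi x| <= `|y - x|) ->
  (forall i, (i.+1 < M.+1)%N -> p i < p i.+1) ->
  (forall i, (i < M.+1)%N -> lo <= p i <= hi /\ psi (p i) = 0) ->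
  forall x, lo <= x <= hi -> `|psi x| <= (hi - lo) ^+ M.+1.
Proof.
move=> D L pinc pz.
have RG := @rolle_gen R psi M M.+1 p lo hi D pinc pz.
have diam : forall x y, lo <= x <= hi -> lo <= y <= hi -> `|x - y| <= hi - lo.
  move=> x y /andP[? ?] /andP[? ?]; rewrite ler_norml; apply/andP; split; lra.
suff S : forall j, (j <= M)%N -> forall x, lo <= x <= hi ->
    `|derive1n (M - j) psi x| <= (hi - lo) ^+ j.+1.
  by move=> x hx; have := S M (leqnn M) x hx; rewrite subnn derive1n0.
elim => [|j IH] jM x hx.
  have [q [_ qz]] := RG M (leqnn M).
  have h0 : (0 < M.+1 - M)%N by rewrite subSnn.
  have [hq zq] := qz 0%N h0.
  rewrite subn0 expr1 -[derive1n M psi x]subr0 -zq.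
  by apply: (le_trans (L _ _)); exact: diam.
have [q [_ qz]] := RG (M - j.+1)%N (leq_subr _ _).
have h0 : (0 < M.+1 - (M - j.+1))%N by rewrite subSn ?leq_subr // ltnS.
have [hq zq] := qz 0%N h0.
have Dk : forall x, derivable (derive1n (M - j.+1) psi) x 1.
  by apply: D; rewrite ltn_subrL; apply/andP; split => //; apply: leq_trans jM.
rewrite -[derive1n (M - j.+1) psi x]subr0 -zq.
have HB : forall c, lo <= c <= hi -> `|derive1 (derive1n (M - j.+1) psi) c| <= (hi - lo) ^+ j.+1.
  move=> c hc; rewrite -derive1nS -subSn //; rewrite subSS; exact: IH (ltnW jM) c hc.
apply: (le_trans (@mvt_bound R _ lo hi _ Dk HB x (q 0%N) hx hq)).
rewrite mulrC [X in _ <= X]exprS ler_wpM2r //; first by apply: exprn_ge0; have := diam _ _ hx hx; lra.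
exact: diam.
Qed.
Definition lagf (R : realType) (m : nat) (p : nat -> R) (i : 'I_m) : 'I_m -> {poly R} :=
  fun j => (p i - p j)^-1 *: ('X - (p j)%:P).

Arguments lagf {R m}.

Definition lag (R : realType) (m : nat) (p : nat -> R) (i : 'I_m) : {poly R} :=
  \prod_(j < m | j != i) lagf p i j.

Arguments lag {R m}.

Definition lagP (R : realType) (m : nat) (p : nat -> R) (y : nat -> R) : {poly R} :=
  \sum_(i < m) y i *: lag p i.

Arguments lagP {R}.

Section Lag.
Variables (R : realType) (m : nat) (p : nat -> R).
Hypothesis pinj : forall i j : 'I_m, i != j -> p i != p j.

Lemma size_lag (i : 'I_m) : (size (lag p i) <= m)%N.
Proof.
rewrite /lag size_prod; last first.
  move=> j ji; rewrite /lagf scaler_eq0 invr_eq0 subr_eq0 polyXsubC_eq0 orbF.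
  by rewrite pinj // eq_sym.
have -> : (\sum_(j < m | j != i) size (lagf p i j) = \sum_(j < m | j != i) 2)%N.
  apply: eq_bigr => j ji; rewrite /lagf size_scale ?size_XsubC //.
  by rewrite invr_eq0 subr_eq0 pinj // eq_sym.
rewrite sum_nat_const cardC1 card_ord.
case: m i => [[]//|n] _ /=; lia.
Qed.

Lemma size_lagP (y : nat -> R) : (size (lagP m p y) <= m)%N.
Proof.
apply: (leq_trans (size_sum _ _ _)); apply/bigmax_leqP => i _.
exact: leq_trans (size_scale_leq _ _) (size_lag i).
Qed.

Lemma lag_eval (i : 'I_m) x :
  (lag p i).[x] = \prod_(j < m | j != i) ((x - p j) / (p i - p j)).
Proof.
rewrite /lag horner_prod; apply: eq_bigr => j _.
by rewrite /lagf hornerZ hornerXsubC mulrC.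
Qed.

Lemma lagP_node (y : nat -> R) (k : 'I_m) : (lagP m p y).[p k] = y k.
Proof.
rewrite /lagP horner_sum (bigD1 k) //= big1 ?addr0.
  rewrite hornerZ lag_eval big1 ?mulr1 // => j jk.
  by rewrite divff // subr_eq0 pinj // eq_sym.
move=> i ik; rewrite hornerZ lag_eval (bigD1 k) //= ?subrr ?mul0r ?mulr0 //.
by rewrite eq_sym.
Qed.

Lemma lagP_bound (y : nat -> R) (lo hi h Y : R) : 0 < h ->
  (forall i j : 'I_m, i != j -> h <= `|p i - p j|) ->
  (forall i : 'I_m, lo <= p i <= hi) ->
  (forall i : 'I_m, `|y i| <= Y) ->
  forall x, lo <= x <= hi ->
  `|(lagP m p y).[x]| <= m%:R * Y * ((hi - lo) / h) ^+ m.-1.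
Proof.
move=> h0 hsep hp hy x hx.
rewrite /lagP horner_sum.
apply: (le_trans (ler_norm_sum _ _ _)).
have -> : m%:R * Y * ((hi - lo) / h) ^+ m.-1 =
    \sum_(i < m) (Y * ((hi - lo) / h) ^+ m.-1).
  by rewrite sumr_const card_ord -[in RHS]mulr_natl mulrA.
apply: ler_sum => i _.
rewrite hornerZ normrM lag_eval normr_prod.
apply: ler_pM => //.
  by apply: prodr_ge0 => j _.
have -> : m.-1 = #|[pred j : 'I_m | j != i]| by rewrite cardC1 card_ord.
rewrite -prodr_const.
apply: ler_prod => j ji; rewrite normr_ge0 /= normrM normfV.
have ij : i != j by rewrite eq_sym.
have hij := hsep i j ij.
apply: ler_pM => //.
- by have := hp j; move: hx; move=> /andP[? ?] /andP[? ?]; rewrite ler_norml; apply/andP; split; lra.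
- by rewrite lef_pV2 ?posrE //; apply: lt_le_trans hij.
Qed.

End Lag.

Lemma Ival_b (R : realType) n j (k : nat) t : (0 < n)%N ->
  @Ival R n (j + k%:Z) t ->
  @xpt R n (j - 1) - (k%:R + 1) * @hstep R n <= t /\
  t <= @xpt R n (j - 1) - k%:R * @hstep R n.
Proof.
move=> n0 /andP[h1 h2]; split.
  suff -> : @xpt R n (j - 1) - (k%:R + 1) * @hstep R n = @xpt R n (j + k%:Z) by [].
  by rewrite /xpt /hstep !intrD ?intrN !pmulrn; ring.
suff -> : @xpt R n (j - 1) - k%:R * @hstep R n = @xpt R n (j + k%:Z - 1) by [].
by rewrite /xpt /hstep !intrD ?intrN !pmulrn; ring.
Qed.
Arguments Ival_b {R n j k t}.


Theorem lemma1 (R : realType) (r : nat) : (2 <= r)%N ->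
  exists2 c1 : R, 0 < c1 &
    forall n : nat, (0 < n)%N ->
    forall g : R -> R, Wclass (r - 1) g ->
    forall j : int,
      (forall k : nat, (k <= 2 * (r - 2))%N ->
         exists2 t : R, @Ival R n (j + k%:Z) t & `|g t| <= (@hstep R n) ^+ (r - 1)) ->
      forall x : R,
        (exists2 k : nat, (k <= 2 * (r - 2))%N & @Ival R n (j + k%:Z) x) ->
        `|g x| <= c1 * (@hstep R n) ^+ (r - 1).
Proof.
case: r => [|[|M]] // _.
have e1 : (M.+2 - 1 = M.+1)%N by rewrite subSS subn0.
have e2 : (M.+2 - 2 = M)%N by rewrite subSS subSS subn0.
rewrite e1 e2.
pose K : R := (2 * M + 1)%:R.
have K0 : 0 < K by rewrite /K ltr0n addn1.
exists (K ^+ M.+1 + M.+1%:R * K ^+ M).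
  by apply: addr_gt0; [exact: exprn_gt0|apply: mulr_gt0; [by rewrite ltr0n|exact: exprn_gt0]].
move=> n n0 g [_ Dg ACg aeg] j Ht x [k0 k0M Hx].
have D : forall k, (k < M)%N -> forall x, derivable (derive1n k g) x 1 := Dg.
have AC : forall a b : R, a <= b -> abs_cont_on a b (derive1n M g) := ACg.
have ae : {ae (@lebesgue_measure R), forall x,
    derivable (derive1n M g) x 1 /\ `|derive1 (derive1n M g) x| <= 1}.
  by have := aeg; rewrite derive1nS.
have L := @lip_le R _ AC ae.
set h := @hstep R n.
have h0 : 0 < h by rewrite /h /hstep divr_gt0 ?pi_gt0 // ltr0n.
have : forall k, exists t : R, (k <= 2 * M)%N ->
    @Ival R n (j + k%:Z) t /\ `|g t| <= h ^+ M.+1.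
  move=> k; case: (boolP (k <= 2 * M)%N) => kM; last by exists 0.
  by have [t ? ?] := Ht k kM; exists t.
case/choice => T HT.
pose p i := T (2 * (M - i))%N.
set a0 := @xpt R n (j - 1).
pose lo := a0 - K * h.
pose hi := a0.
have bnd : forall k t, (k <= 2 * M)%N -> @Ival R n (j + k%:Z) t -> lo <= t <= hi.
  move=> k t kM /(Ival_b n0) [t1 t2].
  have kK : k%:R + 1 <= K by rewrite /K natrD lerD2r ler_nat kM.
  have k0' : 0 <= (k%:R : R) by [].
  rewrite -/a0 -/h in t1 t2; rewrite /lo /hi; apply/andP; split; nra.
have sep : forall k1 k2 t1 t2, (k1 + 2 <= k2)%N ->
    @Ival R n (j + k1%:Z) t1 -> @Ival R n (j + k2%:Z) t2 -> t2 + h <= t1.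
  move=> k1 k2 t1 t2 kk /(Ival_b n0) [a1 b1] /(Ival_b n0) [a2 b2].
  have kk' : (k1%:R + 2 <= (k2%:R : R)) by rewrite -natrD ler_nat.
  rewrite -/h in a1 b1 a2 b2; nra.
have pI : forall i, (i <= M)%N -> @Ival R n (j + (2 * (M - i))%N%:Z) (p i)
    /\ `|g (p i)| <= h ^+ M.+1.
  move=> i iM; apply: HT; rewrite leq_mul2l /=; exact: leq_subr.
have psep : forall i i', (i < i')%N -> (i' <= M)%N -> p i + h <= p i'.
  move=> i i' ii' i'M.
  have [I1 _] := pI i' i'M; have [I2 _] := pI i (leq_trans (ltnW ii') i'M).
  apply: (sep _ _ _ _ _ I1 I2); lia.
have pinc : forall i, (i.+1 < M.+1)%N -> p i < p i.+1.
  move=> i iM; have := psep i i.+1 (ltnSn i) iM; lra.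
have hsep : forall i i' : 'I_M.+1, i != i' -> h <= `|p i - p i'|.
  move=> i i' ii'; have [lt1|lt2|e] := ltngtP i i'.
  - have := psep _ _ lt1 (ltnSE (ltn_ord i')).
    move=> H; rewrite ler0_norm; lra.
  - have := psep _ _ lt2 (ltnSE (ltn_ord i)).
    move=> H; rewrite ger0_norm; lra.
  - by move: ii'; rewrite (val_inj e) eqxx.
have pinj : forall i i' : 'I_M.+1, i != i' -> p i != p i'.
  move=> i i' /hsep H; apply/eqP => E; move: H; rewrite E subrr normr0; lra.
pose P := lagP M.+1 p (fun i => g (p i)).
pose psi := g - horner P.
have Dpsi : forall k, (k < M)%N -> forall x, derivable (derive1n k psi) x 1.
  move=> k kM x'; apply: derivable_subP => i ik; apply: D; exact: leq_ltn_trans ik kM.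
set q := P^`(M).
have qc : forall x y, q.[y] = q.[x].
  move=> x1 y1; apply/eqP; rewrite -subr_eq0 -normr_le0.
  have dq : forall z, derivable (horner q) z 1 by move=> z; exact: derivable_horner.
  have := @mvt_bound R (horner q) (Num.min x1 y1) (Num.max x1 y1) 0 dq.
  move=> /(_ _) H; rewrite -[X in _ <= X](mul0r `|y1 - x1|); apply: H.
  - move=> c _; rewrite -derivE /q -derivnS derivn_poly0 ?horner0 ?normr0 //.
    exact: size_lagP.
  - by rewrite ge_min le_max !lexx ?orbT ?orTb.
  - by rewrite ge_min le_max !lexx ?orbT ?orTb.
have Lpsi : forall x y, `|derive1n M psi y - derive1n M psi x| <= `|y - x|.
  move=> x1 y1; rewrite /psi derive1n_subP //=.
  have E : forall z, (derive1n M g - horner P^`(M)) z = derive1n M g z - q.[z] by [].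
  rewrite !E (qc x1 y1).
  have -> : derive1n M g y1 - q.[x1] - (derive1n M g x1 - q.[x1]) =
    derive1n M g y1 - derive1n M g x1 by ring.
  exact: L.
have zeros : forall i, (i < M.+1)%N -> lo <= p i <= hi /\ psi (p i) = 0.
  move=> i iM; have [I1 _] := pI i iM; split.
    apply: (bnd _ _ _ I1); rewrite leq_mul2l /=; exact: leq_subr.
  rewrite /psi /= /P.
  have := @lagP_node R M.+1 p pinj (fun i => g (p i)) (Ordinal iM).
  move=> /= E; have -> : (g - horner (lagP M.+1 p (fun i0 : nat => g (p i0)))) (p i) = g (p i) - (lagP M.+1 p (fun i0 : nat => g (p i0))).[p i] by [].
  by rewrite E subrr.
have hx : lo <= x <= hi := bnd _ _ k0M Hx.
have B1 := @down_bound R psi M p lo hi Dpsi Lpsi pinc zeros x hx.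
have B2 := @lagP_bound R M.+1 p (fun i => g (p i)) lo hi h (h ^+ M.+1) h0 hsep
  (fun i => (zeros i (ltn_ord i)).1) (fun i => (pI i (ltnSE (ltn_ord i))).2) x hx.
have hl : hi - lo = K * h by rewrite /hi /lo opprB addrC subrK.
rewrite hl in B1 B2; rewrite mulfK ?gt_eqF // in B2.
have -> : g x = psi x + P.[x] by rewrite /psi /= subrK.
apply: (le_trans (ler_normD _ _)).
rewrite mulrDl; apply: lerD.
  by rewrite -exprMn.
by apply: (le_trans B2); rewrite le_eqVlt; apply/orP; left; apply/eqP; rewrite /=; ring.
Qed.
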